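(* Let $\mathcal{X}$ be an input space, let predictors be functions $\theta:\mathcal{X}\to\mathbb{R}^K$, and let each input $x\in\mathcal{X}$ have label $y=y(x)$ given by a fixed labeling function common to all distributions considered. Let $L(\cdot,\cdot)$ be a loss function such that $L(v,y)$ is convex in its first argument $v\in\mathbb{R}^K$. For a probability density $Q$ on $\mathcal{X}$ and a predictor $\theta$, define the expected loss $\mathcal{L}(Q,\theta)=\int_x L(\theta(x),y)\,Q(x)\,dx$ (assumed finite for all predictors considered). Let $Q_S^1,\dots,Q_S^n$ be source densities on $\mathcal{X}$, and for each $1\le k\le n$ let $\theta_S^k=\arg\min_{\theta}\mathcal{L}(Q_S^k,\theta)$ be an optimal source predictor. Assume there exists $\lambda\in\mathbb{R}^n$ with $\lambda\ge 0$ and $\lambda^\top\mathbb{1}=1$ such that the target density satisfies $Q_T=\sum_{i=1}^n\lambda_iQ_S^i$. Define the target predictor (at points where $Q_T(x)>0$) $$\theta_T(x)=\sum_{k=1}^n\frac{\lambda_kQ_S^k(x)}{\sum_{j=1}^n\lambda_jQ_S^j(x)}\,\theta_S^k(x).$$ Then $$\mathcal{L}(Q_T,\theta_T)\le\min_{1\le j\le n}\mathcal{L}(Q_T,\theta_S^j).$$ Moreover, letting $\alpha=\arg\min_{1\le j\le n}\mathcal{L}(Q_T,\theta_S^j)$, this inequality is strict if all entries of $\lambda$ are strictly positive and there exists a source $i$ for which $\mathcal{L}(Q_S^i,\theta_S^i)<\mathcal{L}(Q_S^i,\theta_S^{\alpha})$.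
   Context: This is a model for multi-source domain adaptation: each of $n$ source domains has an input distribution with density $Q_S^k$ on $\mathcal{X}$, the target domain has density $Q_T$, and the supervised expected loss of a predictor $\theta$ under a density $Q$ is $\mathcal{L}(Q,\theta)=\int_x L(\theta(x),y)Q(x)\,dx$, where $y$ denotes the ground-truth label of $x$. *)

(* Defs.v *)
From HB Require Import structures.
From mathcomp Require Import all_boot all_order all_algebra.
From mathcomp Require Import all_classical all_reals all_analysis.
Set Implicit Arguments. Unset Strict Implicit. Unset Printing Implicit Defensive.
Import Order.TTheory GRing.Theory Num.Theory.
Local Open Scope classical_set_scope.
Local Open Scope ring_scope.

Definition exp_loss (d : measure_display) (T : measurableType d) (R : realType)
  (mu : {measure set T -> \bar R}) (K : nat) (Y : Type)
  (L : 'rV[R]_K -> Y -> R) (y : T -> Y) (Q : T -> R) (theta : T -> 'rV[R]_K) : R :=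
  Rintegral mu setT (fun x => L (theta x) (y x) * Q x).

Definition loss_finite (d : measure_display) (T : measurableType d) (R : realType)
  (mu : {measure set T -> \bar R}) (K : nat) (Y : Type)
  (L : 'rV[R]_K -> Y -> R) (y : T -> Y) (Q : T -> R) (theta : T -> 'rV[R]_K) : Prop :=
  mu.-integrable setT (fun x => (L (theta x) (y x) * Q x)%:E).

Definition is_density (d : measure_display) (T : measurableType d) (R : realType)
  (mu : {measure set T -> \bar R}) (Q : T -> R) : Prop :=
  measurable_fun setT Q /\ (forall x, 0 <= Q x) /\ ((\int[mu]_x (Q x)%:E)%E = 1%E).

(* Target predictor; at points with sum_j lambda_j Q_j(x) = 0 the division
   by 0 yields 0 (MathComp convention x / 0 = 0), i.e. thetaT x = 0 there. *)
Definition thetaT (T : Type) (R : realType) (K n : nat) (lam : 'I_n -> R)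
  (QS : 'I_n -> T -> R) (thetaS : 'I_n -> T -> 'rV[R]_K) (x : T) : 'rV[R]_K :=
  \sum_(k < n) ((lam k * QS k x) / (\sum_(j < n) lam j * QS j x)) *: thetaS k x.

(* Main.v *)
Require Import Defs.
From mathcomp Require Import all_boot all_order all_algebra.
From mathcomp Require Import all_classical all_reals all_analysis.
From mathcomp Require Import ring.
Import Order.TTheory GRing.Theory Num.Theory.
Local Open Scope classical_set_scope.
Local Open Scope ring_scope.

Lemma conv2 (R : realType) K (f : 'rV[R]_K -> R) :
  convex_function setT (fun v : convex_lmodType 'rV[R]_K => f v) ->
  forall t a b, 0 <= t -> t <= 1 ->
  f (t *: a + (1 - t) *: b) <= t * f a + (1 - t) * f b.
Proof.
move=> cf t a b t0 t1.
by have := cf (Itv01 t0 t1) a b (mem_set I) (mem_set I).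
Qed.

Lemma jensen (R : realType) K (f : 'rV[R]_K -> R) :
  convex_function setT (fun v : convex_lmodType 'rV[R]_K => f v) ->
  forall n (w : 'I_n -> R) (v : 'I_n -> 'rV[R]_K),
  (forall k, 0 <= w k) -> \sum_(k < n) w k = 1 ->
  f (\sum_(k < n) w k *: v k) <= \sum_(k < n) w k * f (v k).
Proof.
move=> cf; elim=> [|n IH] w v w0 w1.
  by move: w1; rewrite big_ord0 => /eqP; rewrite eq_sym oner_eq0.
rewrite !big_ord_recr /=.
move: w1; rewrite big_ord_recr /=.
set s := \sum_(i < n) w (widen_ord (leqnSn n) i) => w1.
have s0 : 0 <= s by apply: sumr_ge0 => i _.
have wm : w ord_max = 1 - s by rewrite -w1 addrAC subrr add0r.
have [sz|sp] := eqVneq s 0.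
  have wi : forall i, w (widen_ord (leqnSn n) i) = 0.
    by move=> i; exact: (psumr_eq0P (fun j _ => w0 _) sz).
  rewrite !big1 ?add0r; [|by move=> i _; rewrite wi mul0r|by move=> i _; rewrite wi scale0r].
  by rewrite wm sz subr0 scale1r mul1r.
have spos : 0 < s by rewrite lt_neqAle eq_sym sp s0.
have s1 : s <= 1 by rewrite -w1 lerDl.
have -> : \sum_(i < n) w (widen_ord (leqnSn n) i) *: v (widen_ord (leqnSn n) i)
   = s *: \sum_(i < n) (w (widen_ord (leqnSn n) i) / s) *: v (widen_ord (leqnSn n) i).
  rewrite scaler_sumr; apply: eq_bigr => i _; by rewrite scalerA mulrCA mulfV ?mulr1.
rewrite wm; apply: le_trans (@conv2 _ _ f cf _ _ _ s0 s1) _.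
rewrite lerD2r.
have IH' := IH (fun i => w (widen_ord (leqnSn n) i) / s) (fun i => v (widen_ord (leqnSn n) i)).
have H : s * f (\sum_(i < n) (w (widen_ord (leqnSn n) i) / s) *: v (widen_ord (leqnSn n) i))
   <= s * \sum_(i < n) (w (widen_ord (leqnSn n) i) / s) * f (v (widen_ord (leqnSn n) i)).
  rewrite ler_pM2l //; apply: IH'.
    by move=> k; rewrite divr_ge0.
  by rewrite -mulr_suml mulfV.
apply: le_trans H _; rewrite mulr_sumr le_eqVlt; apply/orP; left; apply/eqP.
apply: eq_bigr => i _; by rewrite mulrA mulrCA mulfV ?mulr1.
Qed.
Lemma Rint_sum (d : measure_display) (T : measurableType d) (R : realType)
  (mu : {measure set T -> \bar R}) (I : Type) (s : seq I) (f : I -> T -> R) :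
  (forall i, mu.-integrable setT (fun x => (f i x)%:E)) ->
  mu.-integrable setT (fun x => (\sum_(i <- s) f i x)%:E) /\
  Rintegral mu setT (fun x => \sum_(i <- s) f i x) = \sum_(i <- s) Rintegral mu setT (f i).
Proof.
move=> fi; elim: s => [|i s [IHi IHe]].
  split.
    under eq_fun do rewrite big_nil. exact: integrable0.
  rewrite big_nil; under eq_Rintegral do rewrite big_nil.
  by rewrite /Rintegral integral0.
split.
  under eq_fun do rewrite big_cons.
  exact: (integrableD measurableT (fi i) IHi).
rewrite big_cons; under eq_Rintegral do rewrite big_cons.
rewrite RintegralD //; [by congr (_ + _); exact: IHe | exact: fi].
Qed.
Arguments Rint_sum {d T R mu I} s f _.

Theorem lemma1 (d : measure_display) (T : measurableType d) (R : realType)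
  (mu : {measure set T -> \bar R}) (K : nat) (Y : Type)
  (L : 'rV[R]_K -> Y -> R) (y : T -> Y) (n : nat)
  (QS : 'I_n -> T -> R) (QT : T -> R) (lam : 'I_n -> R)
  (thetaS : 'I_n -> T -> 'rV[R]_K) :
  (* convexity of the loss in its first argument *)
  (forall yy : Y, convex_function setT (fun v : convex_lmodType 'rV[R]_K => L v yy)) ->
  (* source densities *)
  (forall k, is_density mu (QS k)) ->
  (* lambda in the simplex, and Q_T = sum_i lambda_i Q_S^i *)
  (forall i, 0 <= lam i) -> \sum_(i < n) lam i = 1 ->
  (forall x, QT x = \sum_(i < n) lam i * QS i x) ->
  (* finiteness of all the expected losses considered *)
  (forall j k, loss_finite mu L y (QS k) (thetaS j)) ->
  (forall j, loss_finite mu L y QT (thetaS j)) ->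
  loss_finite mu L y QT (thetaT lam QS thetaS) ->
  (* theta_S^k minimizes the expected loss under Q_S^k *)
  (forall k (theta : T -> 'rV[R]_K), loss_finite mu L y (QS k) theta ->
     exp_loss mu L y (QS k) (thetaS k) <= exp_loss mu L y (QS k) theta) ->
  (forall j, exp_loss mu L y QT (thetaT lam QS thetaS)
             <= exp_loss mu L y QT (thetaS j)) /\
  (forall alpha : 'I_n,
     (forall j, exp_loss mu L y QT (thetaS alpha) <= exp_loss mu L y QT (thetaS j)) ->
     (forall i, 0 < lam i) ->
     (exists i, exp_loss mu L y (QS i) (thetaS i) < exp_loss mu L y (QS i) (thetaS alpha)) ->
     exp_loss mu L y QT (thetaT lam QS thetaS) < exp_loss mu L y QT (thetaS alpha)).
Proof.
move=> cvx dens lam0 lam1 QTE finS finT finTT opt.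
have QS0 : forall k x, 0 <= QS k x by move=> k x; case: (dens k) => _ [].
(* pointwise Jensen *)
have A : forall x, L (thetaT lam QS thetaS x) (y x) * QT x <=
    \sum_(k < n) lam k * (L (thetaS k x) (y x) * QS k x).
  move=> x; rewrite QTE.
  set q := \sum_(j < n) lam j * QS j x.
  have q0 : 0 <= q by apply: sumr_ge0 => j _; rewrite mulr_ge0.
  have [qz|qn] := eqVneq q 0.
    rewrite qz mulr0 big1 // => k _.
    have := psumr_eq0P (fun j _ => mulr_ge0 (lam0 j) (QS0 j x)) qz.
    move=> /(_ k isT) H; by rewrite mulrCA H mulr0.
  have := @jensen _ _ (fun v => L v (y x)) (cvx (y x)) n
    (fun k => lam k * QS k x / q) (fun k => thetaS k x).
  rewrite -/(thetaT lam QS thetaS x).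
  move=> /(_ _ _) J.
  have s1 : \sum_(k < n) (lam k * QS k x / q) = 1 by rewrite -mulr_suml; apply: divff; exact: qn.
  have J' := J (fun k => divr_ge0 (mulr_ge0 (lam0 k) (QS0 k x)) q0) s1.
  rewrite mulrC; apply: le_trans (ler_wpM2l q0 J') _.
  rewrite mulr_sumr le_eqVlt; apply/orP; left; apply/eqP; apply: eq_bigr => k _.
  have qq : q / q = 1 := mulfV qn.
  by rewrite -[RHS]mulr1 -qq; ring.
have intS : forall j k, mu.-integrable setT
    (fun x => (lam k * (L (thetaS j x) (y x) * QS k x))%:E).
  by move=> j k; exact: (integrableZl measurableT (lam k) (finS j k)).
have expQT : forall j, exp_loss mu L y QT (thetaS j) =
    \sum_(k < n) lam k * exp_loss mu L y (QS k) (thetaS j).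
  move=> j; rewrite /exp_loss.
  have -> : Rintegral mu setT (fun x => L (thetaS j x) (y x) * QT x) =
      Rintegral mu setT (fun x => \sum_(k < n) lam k * (L (thetaS j x) (y x) * QS k x)).
    by apply: eq_Rintegral => x _; rewrite QTE mulr_sumr; apply: eq_bigr => k _; rewrite mulrCA.
  rewrite (Rint_sum (index_enum _) (fun k x => lam k * (L (thetaS j x) (y x) * QS k x)) (intS j)).2; apply: eq_bigr => k _.
  by rewrite RintegralZl //; exact: finS.
have B : exp_loss mu L y QT (thetaT lam QS thetaS) <=
    \sum_(k < n) lam k * exp_loss mu L y (QS k) (thetaS k).
  rewrite /exp_loss.
  apply: le_trans (le_Rintegral measurableT finTT
     (Rint_sum (index_enum _) (fun k x => lam k * (L (thetaS k x) (y x) * QS k x)) _).1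
     (fun x _ => A x)) _.
    by move=> k; exact: intS.
  rewrite (Rint_sum (index_enum _) (fun k x => lam k * (L (thetaS k x) (y x) * QS k x)) _).2.
    rewrite le_eqVlt; apply/orP; left; apply/eqP; apply: eq_bigr => k _.
    by rewrite RintegralZl //; exact: finS.
  by move=> k; exact: intS.
split.
  move=> j; apply: le_trans B _; rewrite expQT.
  by apply: ler_sum => k _; apply: ler_wpM2l => //; apply: opt; exact: finS.
move=> alpha _ lampos [i lti].
apply: le_lt_trans B _; rewrite expQT.
rewrite (bigD1 i) //= [X in _ < X](bigD1 i) //=.
apply: ltr_leD; first by rewrite ltr_pM2l.
by apply: ler_sum => k _; apply: ler_wpM2l => //; apply: opt; exact: finS.
Qed.
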